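(* Let $\overline{G}_n=\overline{H}_0\overline{H}_1\cdots\overline{H}_{n-1}$ be a polyphenyl hexagonal chain with $n$ hexagons and let $t_k$ be the tail vertex (in $\overline{H}_{k-1}$) of the cut-edge attaching $\overline{H}_k$, $1\le k\le n-1$. Then $$W(\overline{G}_n)=6\sum_{k=1}^{n-1}\sum_{i=1}^{k}g(t_i)+45n^2-18n=6\sum_{k=1}^{n-1}(n-k)g(t_k)+45n^2-18n,$$ where $g(t_1)=9$ and, for $k\ge2$, $g(t_k)=12(k-1)+9$ if $t_k$ is $o_{k-1}$, $g(t_k)=18(k-1)+9$ if $t_k$ is $m_{k-1}$, and $g(t_k)=24(k-1)+9$ if $t_k$ is $p_{k-1}$.
   Context: All graphs are simple and connected; the Wiener index is $W(G)=\sum_{\{u,v\}\subseteq V(G)}d_G(u,v)$ with $d_G$ the shortest-path distance. A polyphenyl hexagonal chain $\overline{G}_n=\overline{H}_0\overline{H}_1\cdots\overline{H}_{n-1}$ of length $n$ consists of pairwise vertex-disjoint hexagons (6-cycles) $\overline{H}_0,\dots,\overline{H}_{n-1}$ together with cut-edges: $\overline{G}_1=\overline{H}_0$, and for $k\ge1$, $\overline{G}_{k+1}$ is obtained from $\overline{G}_k$ by adding $\overline{H}_k$ and a cut-edge joining a vertex $c_k$ of $\overline{H}_k$ to a vertex $t_k$ of $\overline{H}_{k-1}$ (the tail), where for $k\ge2$, $t_k\ne c_{k-1}$. For $k\ge1$, a vertex of $\overline{H}_k$ at distance $1$, $2$, $3$ from $c_k$ is an ortho-, meta-, para-vertex of $\overline{H}_k$,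 denoted $o_k,m_k,p_k$; thus for $k\ge2$, $t_k$ is one of $o_{k-1},m_{k-1},p_{k-1}$. *)

(* Defs.v *)
From mathcomp Require Import all_boot.
Set Implicit Arguments. Unset Strict Implicit. Unset Printing Implicit Defensive.

Definition walkb (T : finType) (e : rel T) (u v : T) (k : nat) : bool :=
  [exists p : k.-tuple T, path e u p && (last u p == v)].

(* shortest-path distance: least k admitting a walk of length k from u to v.
   In a connected graph every distance is < #|T|, so the search over
   0 .. #|T|-1 finds it. *)
Definition dist (T : finType) (e : rel T) (u v : T) : nat :=
  find (walkb e u v) (iota 0 #|T|).

Definition wiener (T : finType) (e : rel T) : nat :=
  \sum_(u : T) \sum_(v : T | enum_rank u < enum_rank v) dist e u v.

(* Vertex (k, j): the j-th vertex (in cyclic order) of hexagon H_k.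
   c k : the vertex c_k of H_k incident to the k-th cut edge (k >= 1);
   t k : the tail vertex t_k of H_(k-1) of that cut edge (k >= 1). *)
Definition pvert (n : nat) := ('I_n * 'I_6)%type.

Definition hex_adj (i j : 'I_6) : bool :=
  (j == (i + 1) %% 6 :> nat) || (i == (j + 1) %% 6 :> nat).

Definition chain_adj (n : nat) (c t : nat -> 'I_6) : rel (pvert n) :=
  fun x y =>
    [|| ((x.1 == y.1 :> nat) && hex_adj x.2 y.2),
        [&& 1 <= x.1, (y.1 : nat) == x.1 - 1, x.2 == c x.1 & y.2 == t x.1]
      | [&& 1 <= y.1, (x.1 : nat) == y.1 - 1, y.2 == c y.1 & x.2 == t y.1]].

Arguments chain_adj n c t : clear implicits.

Definition valid_chain (n : nat) (c t : nat -> 'I_6) : Prop :=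
  forall k, 2 <= k < n -> t k != c k.-1.

Definition hexdist (i j : 'I_6) : nat :=
  minn ((i + 6 - j) %% 6) ((j + 6 - i) %% 6).

(* g(t_k): t_k is an ortho/meta/para vertex of H_(k-1) according as its
   distance from c_(k-1) in H_(k-1) is 1/2/3. *)
Definition gval (c t : nat -> 'I_6) (k : nat) : nat :=
  if k == 1 then 9
  else match hexdist (t k) (c k.-1) with
       | 1 => 12 * (k - 1) + 9
       | 2 => 18 * (k - 1) + 9
       | _ => 24 * (k - 1) + 9
       end.

(* Main.v *)
Require Import Defs.
From mathcomp Require Import all_boot zify.

Definition o6 (m : nat) : 'I_6 := Ordinal (ltn_pmod m (isT : 0 < 6)).
Definition stepto (i j : 'I_6) : 'I_6 :=
  if (j + 6 - i) %% 6 <= 3 then o6 (j + 5) else o6 (j + 1).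
Lemma stepto_ok (i j : 'I_6) : j != i -> hex_adj (stepto i j) j && (hexdist i (stepto i j) + 1 == hexdist i j).
Proof. case: i j => [[|[|[|[|[|[|//]]]]]] ?] [[|[|[|[|[|[|//]]]]]] ?] //. Qed.
Lemma hsum (x : 'I_6) : \sum_(i < 6) hexdist i x = 9.
Proof. rewrite !big_ord_recr big_ord0 /=. case: x => [[|[|[|[|[|[|//]]]]]] ?] //. Qed.
Lemma hlip (i j k : 'I_6) : hex_adj j k -> hexdist i k <= hexdist i j + 1.
Proof. case: i j k => [[|[|[|[|[|[|//]]]]]] ?] [[|[|[|[|[|[|//]]]]]] ?] [[|[|[|[|[|[|//]]]]]] ?] //. Qed.
Lemma h0 (i j : 'I_6) : hexdist i j = 0 -> i = j.
Proof. case: i j => [[|[|[|[|[|[|//]]]]]] ?] [[|[|[|[|[|[|//]]]]]] ?] //; by move=> _; apply: val_inj. Qed.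
Lemma hle3 (i j : 'I_6) : hexdist i j <= 3.
Proof. case: i j => [[|[|[|[|[|[|//]]]]]] ?] [[|[|[|[|[|[|//]]]]]] ?] //. Qed.
Lemma hii (i : 'I_6) : hexdist i i = 0.
Proof. case: i => [[|[|[|[|[|[|//]]]]]] ?] //. Qed.
Lemma hsym (i j : 'I_6) : hexdist i j = hexdist j i.
Proof. case: i j => [[|[|[|[|[|[|//]]]]]] ?] [[|[|[|[|[|[|//]]]]]] ?] //. Qed.
Lemma hlip' (i j k : 'I_6) : hex_adj j k -> hexdist k i <= hexdist j i + 1.
Proof. rewrite (hsym k) (hsym j); exact: hlip. Qed.
Lemma hsum' (x : 'I_6) : \sum_(i < 6) hexdist x i = 9.
Proof. rewrite -(hsum x); apply: eq_bigr => i _; exact: hsym. Qed.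

Lemma walk0 (T : finType) (e : rel T) u : walkb e u u 0.
Proof. apply/existsP. exists (in_tuple [::]). by rewrite /= eqxx. Qed.

Lemma walk_ext (T : finType) (e : rel T) u v w k :
  walkb e u v k -> e v w -> walkb e u w k.+1.
Proof.
case/existsP => p /andP [Hp /eqP Hl] Hvw; apply/existsP.
exists (rcons_tuple p w) => /=.
by rewrite rcons_path Hp Hl Hvw last_rcons eqxx.
Qed.

Lemma path_lb (T : Type) (e : rel T) (f : T -> nat) (s : seq T) u :
  (forall y z, e y z -> f z <= f y + 1) -> path e u s -> f (last u s) <= f u + size s.
Proof.
move=> Hf; elim: s u => [|x s IH] u /=; first by rewrite addn0.
case/andP => Hux /IH Hs.
have := Hf _ _ Hux. lia.
Qed.

Lemma walk_lb (T : finType) (e : rel T) (f : T -> nat) u v k :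
  (forall y z, e y z -> f z <= f y + 1) -> walkb e u v k -> f v <= f u + k.
Proof.
move=> Hf /existsP [p /andP [Hp /eqP <-]].
have := @path_lb T e f p u Hf Hp. by rewrite size_tuple.
Qed.

Lemma find_iota (P : pred nat) D N m :
  P (m + D) -> (forall k, k < D -> ~~ P (m + k)) -> D < N -> find P (iota m N) = D.
Proof.
elim: N m D => [|N IH] m D // HD Hlt HDN /=.
case: D HD Hlt HDN => [|D] HD Hlt HDN.
  by rewrite addn0 in HD; rewrite HD.
have /negbTE -> : ~~ P m by have := Hlt 0 isT; rewrite addn0.
congr S; apply: IH => //; first by rewrite addSnnS.
by move=> k Hk; rewrite addSnnS; apply: Hlt.
Qed.

Definition mid (c t : nat -> 'I_6) (a b : nat) : nat := \sum_(a.+1 <= m < b) hexdist (c m) (t m.+1).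
Definition Dlt (c t : nat -> 'I_6) (a : nat) (i : 'I_6) (b : nat) (j : 'I_6) : nat :=
  hexdist i (t a.+1) + (b - a) + mid c t a b + hexdist (c b) j.
Definition Dn (c t : nat -> 'I_6) (a : nat) (i : 'I_6) (b : nat) (j : 'I_6) : nat :=
  if a == b then hexdist i j else if a < b then Dlt c t a i b j else Dlt c t b j a i.

Lemma mid_recr c t a b : a < b -> mid c t a b.+1 = mid c t a b + hexdist (c b) (t b.+1).
Proof. move=> H; by rewrite /mid big_nat_recr. Qed.
Lemma mid_recl c t a b : a.+1 < b -> mid c t a b = hexdist (c a.+1) (t a.+2) + mid c t a.+1 b.
Proof. move=> H; by rewrite /mid big_ltn. Qed.
Lemma mid_nil c t a : mid c t a a.+1 = 0.
Proof. by rewrite /mid big_geq. Qed.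
Lemma mid_le c t a b : mid c t a b <= 3 * (b - a.+1).
Proof.
rewrite /mid mulnC -sum_nat_const_nat.
by apply: leq_sum => m _; apply: hle3.
Qed.

Lemma Dn_sym c t a i b j : Dn c t a i b j = Dn c t b j a i.
Proof.
rewrite /Dn; case: (ltngtP a b) => H //.
by rewrite hsym.
Qed.

Lemma Dn_self c t a i : Dn c t a i a i = 0.
Proof. by rewrite /Dn eqxx hii. Qed.

Lemma Dn_pos c t a i b j : Dn c t a i b j = 0 -> a = b /\ i = j.
Proof.
rewrite /Dn /Dlt; case: eqP => [->|Hne]; first by move/h0.
case: ltngtP => H; lia.
Qed.

Lemma cut1 c t a i m : a < m.+1 -> Dn c t a i m.+1 (c m.+1) = Dn c t a i m (t m.+1) + 1.
Proof.
move=> Ha; rewrite /Dn /Dlt.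
have -> : (a == m.+1) = false by apply/eqP; lia.
rewrite Ha hii addn0.
case: (ltngtP a m) => H; last first.
- by rewrite H subSnn mid_nil; lia.
- lia.
- rewrite mid_recr //; lia.
Qed.

Lemma cut2 c t a i m : m.+1 <= a -> Dn c t a i m (t m.+1) = Dn c t a i m.+1 (c m.+1) + 1.
Proof.
move=> Ha; rewrite /Dn /Dlt.
have -> : (a == m) = false by apply/eqP; lia.
have -> : (a < m) = false by apply/negbTE; rewrite -leqNgt; lia.
rewrite hii.
case: (ltngtP a m.+1) => H.
- lia.
- rewrite (mid_recl _ _ m) //; lia.
- by rewrite H subSnn mid_nil hsym; lia.
Qed.

Lemma Dn_bound c t n a i b j : a < n -> b < n -> Dn c t a i b j < 6 * n.
Proof.
move=> Ha Hb; rewrite /Dn /Dlt.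
have := hle3 i j; have := hle3 j i.
have := hle3 i (t a.+1); have := hle3 j (t b.+1).
have := hle3 (c b) j; have := hle3 (c a) i.
have := mid_le c t a b; have := mid_le c t b a.
case: eqP => [_|Hne]; first lia.
case: (ltngtP a b) => H; lia.
Qed.

Lemma Dn_lt c t a i b j : a < b -> Dn c t a i b j = Dlt c t a i b j.
Proof. move=> H; rewrite /Dn; case: (ltngtP a b) H => //. Qed.
Lemma Dn_gt c t a i b j : b < a -> Dn c t a i b j = Dlt c t b j a i.
Proof. move=> H; rewrite /Dn; case: (ltngtP a b) H => //. Qed.
Lemma Dn_eq c t a i j : Dn c t a i a j = hexdist i j.
Proof. by rewrite /Dn eqxx. Qed.

Lemma lip n c t (x y z : pvert n) : chain_adj n c t y z ->
  Dn c t x.1 x.2 z.1 z.2 <= Dn c t x.1 x.2 y.1 y.2 + 1.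
Proof.
case: x y z => [[a Ha] i] [[b Hb] j] [[b' Hb'] j'] /=.
rewrite /chain_adj /=; case/or3P.
- case/andP => /eqP Hbb Hadj; subst b'.
  case: (ltngtP a b) => H.
  + rewrite !Dn_lt // /Dlt; have := hlip (c b) _ _ Hadj; lia.
  + rewrite !Dn_gt // /Dlt; have := hlip' (t b.+1) _ _ Hadj; lia.
  + rewrite H !Dn_eq; exact: hlip _ _ _ Hadj.
- case/and4P => H1 /eqP Hb2 /eqP -> /eqP ->; subst b'.
  case: b Hb Hb' H1 => // m Hm Hm' _; rewrite subn1 /=.
  case: (leqP m.+1 a) => H.
  + rewrite cut2 //; lia.
  + rewrite cut1 //; lia.
- case/and4P => H1 /eqP Hb2 /eqP -> /eqP ->; subst b.
  case: b' Hb' Hb H1 => // m Hm Hm' _; rewrite subn1 /=.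
  case: (leqP m.+1 a) => H.
  + rewrite cut2 //; lia.
  + rewrite cut1 //; lia.
Qed.

Lemma desc n c t (x y : pvert n) : y != x -> exists z : pvert n,
  chain_adj n c t z y /\ Dn c t x.1 x.2 z.1 z.2 + 1 = Dn c t x.1 x.2 y.1 y.2.
Proof.
case: x y => [[a Ha] i] [[b Hb] j] Hne /=.
case: (ltngtP a b) => H.
- case: (eqVneq j (c b)) => Hj.
  + subst j; case: b Hb H Hne => // m Hm H _.
    exists (Ordinal (ltnW Hm), t m.+1); split.
    * rewrite /chain_adj /=; apply/orP; right; apply/orP; right.
      by rewrite subn1 /= !eqxx.
    * by rewrite /= cut1.
  + have /andP [Hadj /eqP Hd] := stepto_ok _ _ Hj.
    exists (Ordinal Hb, stepto (c b) j); split.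
    * by rewrite /chain_adj /= eqxx Hadj.
    * rewrite /= !Dn_lt // /Dlt -Hd; lia.
- case: (eqVneq j (t b.+1)) => Hj.
  + subst j; have Hm : b.+1 < n by apply: leq_ltn_trans H Ha.
    exists (Ordinal Hm, c b.+1); split.
    * rewrite /chain_adj /=; apply/orP; right; apply/orP; left.
      by rewrite subn1 /= !eqxx.
    * by rewrite /= cut2.
  + have /andP [Hadj /eqP Hd] := stepto_ok _ _ Hj.
    exists (Ordinal Hb, stepto (t b.+1) j); split.
    * by rewrite /chain_adj /= eqxx Hadj.
    * rewrite /= !Dn_gt // /Dlt (hsym (stepto _ _)) (hsym j) -Hd; lia.
- subst b; case: (eqVneq j i) => Hji.
  + by subst; move: Hne; rewrite (bool_irrelevance Hb Ha) eqxx.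
  + have /andP [Hadj /eqP Hd] := stepto_ok _ _ Hji.
    exists (Ordinal Hb, stepto i j); split.
    * by rewrite /chain_adj /= eqxx Hadj.
    * by rewrite /= !Dn_eq.
Qed.

Lemma reach n c t (x : pvert n) k : forall y : pvert n,
  Dn c t x.1 x.2 y.1 y.2 = k -> walkb (chain_adj n c t) x y k.
Proof.
elim: k => [|k IH] y Hy.
- have [H1 H2] := Dn_pos _ _ _ _ _ _ Hy.
  have -> : y = x.
    by case: x y H1 H2 {Hy} => [a i] [b j] /= H1 H2; congr pair => //; apply: val_inj.
  exact: walk0.
- have Hne : y != x by apply/eqP => Hyx; move: Hy; rewrite Hyx Dn_self.
  have [z [Hzy Hz]] := desc _ c t _ _ Hne.
  apply: walk_ext (Hzy); apply: IH; lia.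
Qed.

Lemma distE n c t (x y : pvert n) :
  dist (chain_adj n c t) x y = Dn c t x.1 x.2 y.1 y.2.
Proof.
rewrite /dist; apply: find_iota => /=.
- exact: reach.
- move=> k Hk; apply/negP => Hw.
  have := @walk_lb _ _ (fun y : pvert n => Dn c t x.1 x.2 y.1 y.2) _ _ _ (fun y z => @lip n c t x y z) Hw.
  rewrite Dn_self; lia.
- rewrite card_prod !card_ord mulnC; apply: Dn_bound; exact: ltn_ord.
Qed.

Lemma wiener2 (T : finType) (e : rel T) :
  (forall u v, dist e u v = dist e v u) -> (forall u, dist e u u = 0) ->
  2 * wiener e = \sum_u \sum_v dist e u v.
Proof.
move=> Hs H0.
have E : forall u, \sum_v dist e u v =
  \sum_(v | enum_rank u < enum_rank v) dist e u v +
  \sum_(v | enum_rank v < enum_rank u) dist e u v.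
  move=> u; rewrite (bigID (fun v => enum_rank u < enum_rank v)) /=; congr (_ + _).
  rewrite (bigID (fun v => enum_rank v < enum_rank u)) /= [X in _ + X]big1 ?addn0.
  - apply: eq_bigl => v; rewrite -leqNgt; apply: andb_idl => /ltnW //.
  - move=> v; rewrite -!leqNgt => /andP [h1 h2].
    have Hr : enum_rank u = enum_rank v by apply: val_inj; apply/eqP; rewrite eqn_leq h1 h2.
    by rewrite (enum_rank_inj Hr) H0.
rewrite (eq_bigr _ (fun u _ => E u)) big_split /= /wiener mul2n -addnn; congr (_ + _); symmetry.
transitivity (\sum_u \sum_v (if enum_rank v < enum_rank u then dist e u v else 0)).
  by apply: eq_bigr => u _; rewrite big_mkcond.
rewrite exchange_big /=; apply: eq_bigr => v _; rewrite [RHS]big_mkcond.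
apply: eq_bigr => u _; by rewrite Hs.
Qed.

Lemma sum_pair n (F : pvert n -> nat) : \sum_(x : pvert n) F x = \sum_(a < n) \sum_(i < 6) F (a, i).
Proof. by rewrite pair_bigA; apply: eq_bigr => [[a i]] _. Qed.

Definition Q c t a b := \sum_(i < 6) \sum_(j < 6) Dn c t a i b j.
Definition TT c t n := \sum_(a < n) \sum_(b < n) Q c t a b.
Definition A c t n := \sum_(a < n) ((n - a) + mid c t a n).
Definition Gs c t m := \sum_(1 <= i < m.+1) gval c t i.
Definition F1 c t n := \sum_(1 <= k < n) Gs c t k.

Lemma Qsym c t a b : Q c t a b = Q c t b a.
Proof.
rewrite /Q exchange_big; apply: eq_bigr => j _; apply: eq_bigr => i _; exact: Dn_sym.
Qed.

Lemma sum6 X y : \sum_(j < 6) (X + hexdist y j) = 6 * X + 9.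
Proof. by rewrite big_split /= hsum' sum_nat_const card_ord mulnC. Qed.

Lemma Qnn c t a : Q c t a a = 54.
Proof.
rewrite /Q (eq_bigr (fun i => 0 + 9)); last first.
  by move=> i _; rewrite -(sum6 0 i); apply: eq_bigr => j _; rewrite Dn_eq.
by rewrite sum_nat_const card_ord.
Qed.

Lemma Qlt c t a b : a < b -> Q c t a b = 108 + 36 * ((b - a) + mid c t a b).
Proof.
move=> H; rewrite /Q.
rewrite (eq_bigr (fun i => 6 * hexdist i (t a.+1) + (6 * ((b - a) + mid c t a b) + 9))); last first.
  move=> i _; rewrite (eq_bigr (fun j => (hexdist i (t a.+1) + (b - a) + mid c t a b) + hexdist (c b) j)).
    rewrite sum6; lia.
  by move=> j _; rewrite Dn_lt.
rewrite big_split /= -big_distrr /= hsum sum_nat_const card_ord; lia.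
Qed.

Lemma Arec c t n : A c t n.+1 = A c t n + n * (hexdist (c n) (t n.+1) + 1) + 1.
Proof.
rewrite /A big_ord_recr /= subSnn mid_nil.
rewrite (eq_bigr (fun a : 'I_n => ((n - a) + mid c t a n) + (hexdist (c n) (t n.+1) + 1))).
  by rewrite big_split /= sum_nat_const card_ord; lia.
move=> a _; have Ha := ltn_ord a; rewrite /= mid_recr // subSn; lia.
Qed.

Lemma sumQ c t n : \sum_(a < n) Q c t a n = 108 * n + 36 * A c t n.
Proof.
rewrite (eq_bigr (fun a : 'I_n => 108 + 36 * ((n - a) + mid c t a n))); last first.
  by move=> a _; rewrite Qlt.
by rewrite big_split /= -big_distrr sum_nat_const card_ord mulnC.
Qed.

Lemma TTrec c t n : TT c t n.+1 = TT c t n + 2 * (108 * n + 36 * A c t n) + 54.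
Proof.
rewrite /TT (eq_bigr (fun a : 'I_n.+1 => \sum_(b < n) Q c t a b + Q c t a n)); last first.
  by move=> a _; rewrite big_ord_recr.
rewrite big_split !big_ord_recr /= Qnn -sumQ.
have -> : \sum_(b < n) Q c t n b = \sum_(a < n) Q c t a n by apply: eq_bigr => b _; rewrite Qsym.
rewrite mul2n -addnn !addnA; congr (_ + _ + _ + _).
Qed.

Lemma gval_eq N c t m : valid_chain N c t -> m.+1 < N ->
  gval c t m.+1 = 6 * m * (hexdist (c m) (t m.+1) + 1) + 9.
Proof.
move=> V Hm; case: m Hm => [//|m] Hm.
rewrite /gval /= subn1 /= (hsym (c _)).
have Hv := V m.+2; have := hle3 (t m.+2) (c m.+1).
have Hnz : hexdist (t m.+2) (c m.+1) != 0.
  apply/eqP => /h0 E; move: (Hv (introT andP (conj (isT : 1 < m.+2) Hm))); by rewrite E eqxx.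
move: Hnz; case: (hexdist (t m.+2) (c m.+1)) => [|[|[|[|d]]]] //= _ _; lia.
Qed.

Lemma Glem N c t m : valid_chain N c t -> m < N -> Gs c t m = 6 * A c t m + 3 * m.
Proof.
move=> V; elim: m => [|m IH] Hm.
  by rewrite /Gs /A big_geq // big_ord0.
rewrite /Gs big_nat_recr // -/(Gs c t m) IH ?(ltnW Hm) // (gval_eq _ _ _ _ V Hm) Arec.
rewrite /=; nia.
Qed.

Lemma F1rec c t m : F1 c t m.+1 = F1 c t m + Gs c t m.
Proof.
case: m => [|m]; first by rewrite /F1 /Gs !big_geq.
by rewrite /F1 big_nat_recr.
Qed.

Lemma mainind N c t m : valid_chain N c t -> m <= N ->
  TT c t m + 36 * m = 12 * F1 c t m + 90 * m ^ 2.
Proof.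
move=> V; elim: m => [|m IH] Hm.
  by rewrite /TT /F1 big_ord0 big_geq.
rewrite TTrec F1rec (Glem _ _ _ _ V Hm).
have := IH (ltnW Hm); nia.
Qed.

Lemma F1F2 c t n : F1 c t n = \sum_(1 <= k < n) (n - k) * gval c t k.
Proof.
elim: n => [|n IH]; first by rewrite /F1 !big_geq.
rewrite F1rec IH.
case: n IH => [|n] IH; first by rewrite /Gs !big_geq.
rewrite [RHS]big_nat_recr // subSnn mul1n.
rewrite [X in _ = X + _](@eq_big_nat _ _ _ 1 n.+1 _ (fun k => (n.+1 - k) * gval c t k + gval c t k)).
  rewrite big_split /= /Gs [X in _ + X]big_nat_recr //=; lia.
move=> k /andP [_ Hk]; rewrite (subSn (ltnW Hk)) mulSn; lia.
Qed.

Theorem theorem3p2 (n : nat) (c t : nat -> 'I_6) :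
  1 <= n -> valid_chain n c t ->
  wiener (chain_adj n c t) =
    6 * (\sum_(1 <= k < n) \sum_(1 <= i < k.+1) gval c t i) + 45 * n ^ 2 - 18 * n
  /\
  wiener (chain_adj n c t) =
    6 * (\sum_(1 <= k < n) (n - k) * gval c t k) + 45 * n ^ 2 - 18 * n.
Proof.
move=> Hn V.
have W2 : 2 * wiener (chain_adj n c t) = TT c t n.
  rewrite wiener2; last by move=> u; rewrite distE Dn_self.
    rewrite sum_pair /TT; apply: eq_bigr => a _.
    rewrite /Q [RHS]exchange_big; apply: eq_bigr => i _.
    rewrite sum_pair; apply: eq_bigr => b _; apply: eq_bigr => j _.
    by rewrite distE.
  by move=> u v; rewrite !distE Dn_sym.
have M := mainind _ _ _ _ V (leqnn n).
have E2 := F1F2 c t n.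
rewrite /F1 /Gs in M E2.
rewrite -E2; split; lia.
Qed.
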